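(* Let $R$ be a ring, $S_0(R)$ its largest left regular denominator set and $Q_l(R)=S_0(R)^{-1}R$, with group of units $Q_l(R)^*$. Then: (1) $S_0(Q_l(R))=Q_l(R)^*$ and $S_0(Q_l(R))\cap R=S_0(R)$. (2) $Q_l(R)^*$ is the group generated by $S_0(R)$ and $S_0(R)^{-1}:=\{s^{-1}\mid s\in S_0(R)\}$. (3) $Q_l(R)^*=\{s^{-1}t\mid s,t\in S_0(R)\}$. (4) $Q_l(Q_l(R))=Q_l(R)$.
   Context: Rings are associative with $1$. A multiplicatively closed subset $S\subseteq R$ ($1\in S$, $0\notin S$, closed under products) is a left Ore set if $Sr\cap Rs\neq\emptyset$ for all $r\in R,s\in S$; $\mathrm{ass}(S):=\{r\mid sr=0\text{ for some }s\in S\}$. A left Ore set is a left denominator set if $rs=0$ ($r\in R,s\in S$) implies $tr=0$ for some $t\in S$. $\mathrm{Den}_l(R,0)$ denotes the set of left denominator sets $S$ with $\mathrm{ass}(S)=0$; it has a largest element under inclusion, denoted $S_0(R)$ (the largest left regular denominator set), and $Q_l(R):=S_0(R)^{-1}R$ is the largest left quotient ring of $R$; $R$ is regarded as a subring of $Q_l(R)$. For any ring $A$, $S_0(A)$ and $Q_l(A)$ are defined in the same way, so $Q_l(R)\subseteq Q_l(Q_l(R))$ naturally. *)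

(* Defs.v *)
From HB Require Import structures.
From mathcomp Require Import all_boot all_algebra.
Set Implicit Arguments. Unset Strict Implicit. Unset Printing Implicit Defensive.
Import GRing.Theory.
Local Open Scope ring_scope.

Section OreDefs.
Variable R : nzRingType.

Definition mult_closed (S : R -> Prop) : Prop :=
  [/\ S 1, ~ S 0 & forall a b, S a -> S b -> S (a * b)].

Definition left_ore (S : R -> Prop) : Prop :=
  mult_closed S /\
  forall r s, S s -> exists s' r', S s' /\ s' * r = r' * s.

Definition ass (S : R -> Prop) (r : R) : Prop := exists s, S s /\ s * r = 0.

Definition left_den (S : R -> Prop) : Prop :=
  left_ore S /\
  forall r s, S s -> r * s = 0 -> exists t, S t /\ t * r = 0.

Definition Den_l0 (S : R -> Prop) : Prop :=
  left_den S /\ forall r, ass S r -> r = 0.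

Definition is_S0 (S : R -> Prop) : Prop :=
  Den_l0 S /\ forall T, Den_l0 T -> forall x, T x -> S x.

End OreDefs.

Definition is_unit (A : nzRingType) (x : A) : Prop :=
  exists y, x * y = 1 /\ y * x = 1.

(* phi : R -> Q is a left ring of fractions (left localization) of R at S,
   i.e. Q "=" S^{-1}R: phi(s) is a unit for s ∈ S, every element of Q is
   of the form phi(s)^{-1} phi(r) (s ∈ S), and ker phi = ass(S). *)
Definition is_left_loc (R Q : nzRingType) (S : R -> Prop)
  (phi : {rmorphism R -> Q}) : Prop :=
  [/\ forall s, S s -> is_unit (phi s),
      forall q, exists s r, S s /\ phi s * q = phi r
    & forall r, phi r = 0 <-> ass S r].

Inductive gen_group (R : nzRingType) (Q : unitRingType)
    (phi : R -> Q) (S : R -> Prop) : Q -> Prop :=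
  | gg_one : gen_group phi S 1
  | gg_gen : forall s, S s -> gen_group phi S (phi s)
  | gg_inv : forall s, S s -> gen_group phi S ((phi s)^-1)
  | gg_mul : forall x y, gen_group phi S x -> gen_group phi S y ->
               gen_group phi S (x * y).

(* Main.v *)
Require Import Defs.
From HB Require Import structures.
From mathcomp Require Import all_boot all_algebra.
From Stdlib Require Import ClassicalEpsilon.
Import GRing.Theory.
Local Open Scope ring_scope.

Set Implicit Arguments.
Section Aux.
Variables (R : nzRingType) (S0 : R -> Prop) (Q : unitRingType)
    (phi : {rmorphism R -> Q}).
Hypothesis HS0 : is_S0 S0.
Hypothesis HL : is_left_loc S0 phi.

Lemma phi_inj0 r : phi r = 0 -> r = 0.
Proof.
case: HL => _ _ Hk; case: HS0 => [[_ Hass] _].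
by move=> /Hk /Hass.
Qed.

Lemma phi_inj a b : phi a = phi b -> a = b.
Proof.
move=> h; apply/eqP; rewrite -subr_eq0; apply/eqP; apply: phi_inj0.
by rewrite rmorphB h subrr.
Qed.

Lemma phi_unit : forall {s}, S0 s -> phi s \is a GRing.unit.
Proof.
move=> s; case: HL => Hu _ _ => /Hu [y [h1 h2]]; apply/unitrP; exists y; split => //.
Qed.

Lemma key (T : Q -> Prop) : Den_l0 T -> forall r,
  (exists q, T (q * phi r)) -> (forall x, x * r = 0 -> x = 0) -> S0 r.
Proof.
case=> [[[[T1 T0 TM] Tore] Tden] Tass] r Hq Hreg.
have Treg : forall t q, T t -> q * t = 0 -> q = 0.
  move=> t q Tt h; have [t' [Tt' h']] := Tden q t Tt h.
  by apply: Tass; exists t'.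
case: HL => Hu Hloc _.
case: HS0 => _ Hmax.
pose U := fun r => (exists q, T (q * phi r)) /\ (forall x, x * r = 0 -> x = 0).
suff HU : Den_l0 U by apply: (Hmax U HU r); split.
split; [split; [split; [split|]|]|].
- split; first by exists 1; rewrite rmorph1 mulr1.
  by move=> x; rewrite mulr1.
- by case=> [[q]]; rewrite rmorph0 mulr0.
- move=> a b [[q Ha] Ra] [[p Hb] Rb]; split.
    have [t3 [y [Tt3 E]]] := Tore p (q * phi a) Ha.
    exists (y * q); rewrite rmorphM !mulrA -(mulrA y) -E -mulrA.
    by apply: TM.
  by move=> x; rewrite mulrA => /Rb /Ra.
- move=> r0 s [[q Hs] _].
  have [t' [y [Tt' E]]] := Tore (phi r0) (q * phi s) Hs.
  have [c [d [Sc Ec]]] := Hloc (y * q).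
  have [g [h [Sg Eg]]] := Hloc (phi c * t').
  have ug := phi_unit Sg; have uc := phi_unit Sc.
  have ugc : phi g * phi c \is a GRing.unit by rewrite unitrMl.
  exists h, (g * d); split; last first.
    apply: phi_inj; rewrite !rmorphM -Eg -!mulrA E; congr (_ * _).
    by rewrite -Ec !mulrA.
  split.
    exists (phi g * phi c)^-1; rewrite -Eg (mulrA (phi g)) mulKr //.
  move=> x hx; apply: phi_inj0.
  have : (phi x * (phi g * phi c)) * t' = 0.
    by rewrite -mulrA -(mulrA (phi g)) Eg -rmorphM hx rmorph0.
  move/(Treg _ _ Tt') => h0.
  by rewrite -(mulrK ugc (phi x)) h0 mul0r.
- move=> r0 s [_ Rs] h; exists 1; split.
    by split; [exists 1; rewrite rmorph1 mulr1 | move=> x; rewrite mulr1].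
  by rewrite mul1r; apply: Rs.
- move=> r0 [s [[[q Hs] _] h]]; apply: phi_inj0; apply: Tass.
  by exists (q * phi s); split => //; rewrite -mulrA -rmorphM h rmorph0 mulr0.
Qed.

Lemma units_den : Den_l0 (fun q : Q => q \is a GRing.unit).
Proof.
split; [split; [split; [split|]|]|].
- exact: unitr1.
- by rewrite unitr0.
- by move=> a b ua ub; rewrite unitrMl.
- move=> r s us; exists 1, (r * s^-1); split; first exact: unitr1.
  by rewrite mul1r divrK.
- move=> r s us h; exists 1; split; first exact: unitr1.
  by rewrite mul1r -(mulrK us r) h mul0r.
- by move=> r [s [us h]]; rewrite -(mulKr us r) h mulr0.
Qed.

Lemma S0_iff r : phi r \is a GRing.unit <-> S0 r.
Proof.
split; last exact: phi_unit.
move=> ur; apply: (key units_den r); first by exists 1; rewrite mul1r.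
move=> x hx; apply: phi_inj0.
by rewrite -(mulrK ur (phi x)) -rmorphM hx rmorph0 mul0r.
Qed.

Lemma units_S0 : is_S0 (fun q : Q => q \is a GRing.unit).
Proof.
split; first exact: units_den.
move=> T HT x Tx.
have TD := HT; case: HT => [[[[T1 T0 TM] Tore] Tden] Tass].
have Treg : forall t q, T t -> q * t = 0 -> q = 0.
  move=> t q Tt h; have [t' [Tt' h']] := Tden q t Tt h.
  by apply: Tass; exists t'.
case: HL => _ Hloc _.
have [s [r [Ss E]]] := Hloc x.
have us := phi_unit Ss.
have Sr : S0 r.
  apply: (key TD); first by exists (phi s)^-1; rewrite -E mulKr.
  move=> y hy; apply: phi_inj0.
  have : (phi y * phi s) * x = 0 by rewrite -mulrA E -rmorphM hy rmorph0.
  move/(Treg _ _ Tx) => h0.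
  by rewrite -(mulrK us (phi y)) h0 mul0r.
have ur := phi_unit Sr.
by rewrite -(mulKr us x) E unitrMl // unitrV.
Qed.

End Aux.

Theorem theorem2p8 (R : nzRingType) (S0 : R -> Prop) (Q : unitRingType)
    (phi : {rmorphism R -> Q}) :
  is_S0 S0 -> is_left_loc S0 phi ->
  (* (1) S_0(Q_l(R)) = Q_l(R)^*  and  S_0(Q_l(R)) ∩ R = S_0(R) *)
  (is_S0 (fun q : Q => q \is a GRing.unit) /\
   forall r : R, phi r \is a GRing.unit <-> S0 r) /\
  (* (2) Q_l(R)^* is generated by S_0(R) and S_0(R)^{-1} *)
  (forall q : Q, q \is a GRing.unit <-> gen_group phi S0 q) /\
  (* (3) Q_l(R)^* = { s^{-1} t | s, t ∈ S_0(R) } *)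
  (forall q : Q, q \is a GRing.unit <->
     exists s t, [/\ S0 s, S0 t & q = (phi s)^-1 * phi t]) /\
  (* (4) Q_l(Q_l(R)) = Q_l(R) *)
  (forall (S0Q : Q -> Prop) (Q' : nzRingType) (psi : {rmorphism Q -> Q'}),
     is_S0 S0Q -> is_left_loc S0Q psi -> bijective psi).
Proof.
move=> HS0 HL.
have H3 : forall q : Q, q \is a GRing.unit <->
     exists s t, [/\ S0 s, S0 t & q = (phi s)^-1 * phi t].
  move=> q; split.
    move=> uq; case: (HL) => _ Hloc _.
    have [s [r [Ss E]]] := Hloc q.
    have us := phi_unit HL Ss.
    exists s, r; split => //; last by rewrite -E mulKr.
    by apply/(S0_iff HS0 HL); rewrite -E unitrMl.
  case=> s [t [Ss St ->]].
  have us := phi_unit HL Ss; have ut := phi_unit HL St.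
  by rewrite unitrMl // unitrV.
split; first by split; [exact: (units_S0 HS0 HL) | exact: (S0_iff HS0 HL)].
split.
  move=> q; split.
    move/H3 => [s [t [Ss St ->]]].
    by apply: gg_mul; [apply: gg_inv | apply: gg_gen].
  elim=> [|s Ss|s Ss|x y _ ux _ uy].
  - exact: unitr1.
  - exact: (phi_unit HL Ss).
  - by rewrite unitrV; apply: (phi_unit HL Ss).
  - by rewrite unitrMl.
split; first exact: H3.
move=> S0Q Q' psi HSQ HLQ.
have HU := units_S0 HS0 HL.
have SQu : forall x, S0Q x -> x \is a GRing.unit.
  by move=> x; case: HU => _; apply; case: HSQ.
case: HLQ => _ Hloc Hker.
have inj : injective psi.
  move=> a b h; apply/eqP; rewrite -subr_eq0; apply/eqP.
  case: HSQ => [[_ Hass] _]; apply: Hass; apply/Hker.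
  by rewrite rmorphB h subrr.
have surj : forall y, exists x, psi x = y.
  move=> y; have [s [r [Ss E]]] := Hloc y.
  have us := SQu _ Ss.
  exists (s^-1 * r); rewrite rmorphM -E mulrA -rmorphM mulVr //.
  by rewrite rmorph1 mul1r.
pose g := fun y => proj1_sig (constructive_indefinite_description _ (surj y)).
exists g.
  by move=> x; apply: inj; rewrite /g; case: constructive_indefinite_description.
by move=> y; rewrite /g; case: constructive_indefinite_description.
Qed.
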